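(* Let $q=p^m$ with $p$ an odd prime, $q\equiv 1\pmod 3$, $q\geq 13$. (a) For $\pi,\sigma\in P$ with $\pi(x)=a+\frac{r}{x-i}$ and $\sigma(x)=b+\frac{s}{x-j}$ ($r,s\neq0$), $\pi\sigma\in E(C_P(q))$ if and only if $r=s$ and $(b-a)(j-i)=r$. (b) An element $\pi\in PGL(2,q)$ is an isolated vertex of $C_P(q)$ if and only if $\pi(\infty)=\infty$.
   Context: $PGL(2,q)$ is the group of maps $x\mapsto\frac{ax+b}{cx+d}$ ($a,b,c,d\in GF(q)$, $ad\neq bc$) acting on $GF(q)\cup\{\infty\}$ with the usual conventions ($-d/c\mapsto\infty$, $\infty\mapsto a/c$ if $c\neq0$, $\infty\mapsto\infty$ if $c=0$). For $K,i\in GF(q)$ and $r\in GF(q)\setminus\{0\}$, $f_{K,r,i}$ is the element of $PGL(2,q)$ with $f_{K,r,i}(x)=K+\frac{r}{x-i}$ for $x\notin\{i,\infty\}$, $f_{K,r,i}(\infty)=K$, $f_{K,r,i}(i)=\infty$; $P$ is the set of all such $f_{K,r,i}$. $hd(\pi,\sigma)$ is the number of points at which $\pi,\sigma$ differ. With distinguished element $F=\infty$, $\pi^{\triangle}$ is the permutation with $\pi^{\triangle}(\pi^{-1}(\infty))=\pi(\infty)$, $\pi^{\triangle}(\infty)=\infty$, $\pi^{\triangle}(x)=\pi(x)$ otherwise. The contraction graph $C_P(q)$ has vertex set $PGL(2,q)$, with distinct $\pi,\sigma$ adjacent iff $hd(\pi^{\triangle},\sigma^{\triangle})=q-4$. 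*)

(* Defs.v *)
From HB Require Import structures.
From mathcomp Require Import all_boot all_order all_algebra all_fingroup all_field.
Set Implicit Arguments. Unset Strict Implicit. Unset Printing Implicit Defensive.
Import GRing.Theory.
Local Open Scope ring_scope.

(* Points of the projective line GF(q) ∪ {∞}: [None] is ∞. *)
Notation pt F := (option F).

Definition mobius (F : fieldType) (a b c d : F) (x : pt F) : pt F :=
  match x with
  | None => if c == 0 then None else Some (a / c)
  | Some y => if c * y + d == 0 then None else Some ((a * y + b) / (c * y + d))
  end.

Definition is_pgl (F : finFieldType) (f : {ffun pt F -> pt F}) : Prop :=
  exists a b c d : F, a * d != b * c /\ forall x, f x = mobius a b c d x.

Definition fKri (F : finFieldType) (K r i : F) : {ffun pt F -> pt F} :=
  [ffun x => match x with
             | None => Some K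
             | Some y => if y == i then None else Some (K + r / (y - i))
             end].

Definition hd (F : finFieldType) (f g : {ffun pt F -> pt F}) : nat :=
  #|[pred x | f x != g x]|.

Definition contr (F : finFieldType) (f : {ffun pt F -> pt F}) : {ffun pt F -> pt F} :=
  [ffun x => match x with
             | None => None
             | Some _ => if f x == None then f None else f x
             end].

Definition CP_adj (F : finFieldType) (f g : {ffun pt F -> pt F}) : Prop :=
  [/\ is_pgl f, is_pgl g, f <> g & hd (contr f) (contr g) = (#|F| - 4)%N].

Definition CP_isolated (F : finFieldType) (f : {ffun pt F -> pt F}) : Prop :=
  is_pgl f /\ forall g, is_pgl g -> ~ CP_adj f g.

(* Main.v *)
Require Import Defs.
From HB Require Import structures.
From mathcomp Require Import all_boot all_order all_algebra all_fingroup all_field all_solvable.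
From mathcomp Require Import ring zify.
Set Implicit Arguments. Unset Strict Implicit. Unset Printing Implicit Defensive.
Import GRing.Theory.
Local Open Scope ring_scope.

Lemma contr_fKri (F : finFieldType) (K r i y : F) :
  contr (fKri K r i) (Some y) = Some (K + r / (y - i)).
Proof.
rewrite /contr /fKri !ffunE /=.
by case: (y =P i) => [->|]; rewrite ?subrr ?invr0 ?mulr0 ?addr0.
Qed.

Definition agr (F : finFieldType) (f g : {ffun pt F -> pt F}) : {set F} :=
  [set y : F | contr f (Some y) == contr g (Some y)].

Lemma hd_agr (F : finFieldType) (f g : {ffun pt F -> pt F}) :
  hd (contr f) (contr g) = (#|F| - #|agr f g|)%N.
Proof.
rewrite /hd.
have -> : #|[pred x | contr f x != contr g x]| = #|image Some (~: agr f g)|.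
  apply: eq_card => -[y|].
    by rewrite mem_image; last exact: Some_inj; rewrite !inE.
  rewrite !inE /contr !ffunE eqxx /=; apply/esym/negbTE/negP => /imageP [y _] //.
rewrite card_image; last exact: Some_inj.
by rewrite -(cardsC (agr f g)) addKn.
Qed.
Lemma roots_le2 (F : finFieldType) (A : {set F}) (Q : {poly F}) :
  Q != 0 -> (size Q <= 3)%N -> (forall y, y \in A -> root Q y) -> (#|A| <= 2)%N.
Proof.
move=> Q0 sQ hA.
have hr : all (root Q) (enum A) by apply/allP => y; rewrite mem_enum; exact: hA.
have := max_poly_roots Q0 hr (enum_uniq A).
rewrite -cardE => h.
by rewrite -ltnS (leq_trans h sQ).
Qed.

Lemma bound2 (F : finFieldType) (a b r s i j : F) : r != 0 -> s != 0 ->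
  ~ (a = b /\ r = s /\ i = j) ->
  leq #|[set y : F | a + r / (y - i) == b + s / (y - j)] :\: [set i; j]| 2.
Proof.
move=> r0 s0 nab.
pose c := a - b.
pose Q : {poly F} := c *: 'X^2 + (r - s - c * (i + j)) *: 'X + (c * i * j - r * j + s * i)%:P.
have Qy : forall y, Q.[y] = c * (y - i) * (y - j) + r * (y - j) - s * (y - i).
  by move=> y; rewrite /Q !hornerD !hornerZ hornerXn hornerX hornerC /c; ring.
have Qc : forall k, Q`_k = if k == 2%N then c else if k == 1%N then r - s - c * (i + j)
     else if k == 0%N then c * i * j - r * j + s * i else 0.
  move=> k; rewrite /Q !coefD !coefZ coefXn coefX coefC.
  by case: k => [|[|[|k]]] /=; rewrite ?mulr0 ?mulr1 ?addr0 ?add0r.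
apply: (roots_le2 (Q := Q)).
- apply/eqP => Q0.
  have ij : i = j.
    have h : r * (i - j) = 0 by rewrite -[RHS](horner0 i) -Q0 Qy; ring.
    by move/eqP: h; rewrite mulf_eq0 (negPf r0) subr_eq0 => /eqP.
  have c0 : c = 0 by have := Qc 2%N; rewrite Q0 coef0.
  apply: nab; split; first by apply/eqP; rewrite -subr_eq0 -/c c0.
  split => //.
  have h : r - s = 0 by rewrite -[RHS](horner0 (i + 1)) -Q0 Qy c0 -ij; ring.
  by apply/eqP; rewrite -subr_eq0 h.
- by apply/leq_sizeP => k hk; rewrite Qc; case: k hk => [|[|[|k]]].
- move=> y; rewrite !inE negb_or => /andP [/andP [yi yj] /eqP e].
  rewrite /root Qy.
  have yi0 : y - i != 0 by rewrite subr_eq0.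
  have yj0 : y - j != 0 by rewrite subr_eq0.
  have -> : c * (y - i) * (y - j) + r * (y - j) - s * (y - i) =
     ((a + r / (y - i)) - (b + s / (y - j))) * (y - i) * (y - j).
    by rewrite /c; field; rewrite yi0 yj0.
  by rewrite !mulf_eq0 subr_eq0 e eqxx.
Qed.
Lemma root_props (F : fieldType) (u : F) : u ^+ 2 + u + 1 = 0 ->
  [/\ u != 0, u + 1 != 0, u^-1 = - (u + 1) & (u + 1)^-1 = - u].
Proof.
move=> H.
have u0 : u != 0 by apply/eqP => u0; move: H; rewrite u0 expr0n /= !add0r => /eqP; rewrite oner_eq0.
have u1 : u + 1 != 0.
  apply/negP; rewrite addr_eq0 => /eqP um.
  by move: H; rewrite um sqrrN expr1n subrK => /eqP; rewrite oner_eq0.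
split => //.
  apply: (mulfI u0); rewrite mulfV //.
  have -> : u * - (u + 1) = 1 - (u ^+ 2 + u + 1) by ring.
  by rewrite H subr0.
apply: (mulfI u1); rewrite mulfV //.
have -> : (u + 1) * - u = 1 - (u ^+ 2 + u + 1) by ring.
by rewrite H subr0.
Qed.

Lemma agree_pt (F : fieldType) (a b r i j u : F) : u ^+ 2 + u + 1 = 0 -> i != j ->
  (b - a) * (j - i) = r ->
  a + r / ((i + (i - j) * u) - i) = b + r / ((i + (i - j) * u) - j).
Proof.
move=> H ij e; have [u0 u1 iu iu1] := root_props H.
have d0 : i - j != 0 by rewrite subr_eq0.
have -> : (i + (i - j) * u) - i = (i - j) * u by ring.
have -> : (i + (i - j) * u) - j = (i - j) * (u + 1) by ring.
rewrite -e !invfM iu iu1.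
by field.
Qed.
Lemma cube_root (F : finFieldType) : (#|F| %% 3 = 1)%N ->
  exists w : F, [/\ w != 0, w != 1 & w ^+ 2 + w + 1 = 0].
Proof.
move=> h3.
have d3 : (3 %| #|[set: {unit F}]%G|)%N.
  rewrite card_finField_unit.
  have := divn_eq #|F| 3; rewrite h3 => ->.
  by rewrite addn1 /= dvdn_mull.
have [x _ ox] := Cauchy (isT : prime 3) d3.
have x3 : (x ^+ 3 = 1)%g by rewrite -ox expg_order.
have x1 : x != 1%g by apply/eqP => x1; move: ox; rewrite x1 order1.
have [w [w3 w1]] : exists w : F, w ^+ 3 = 1 /\ w != 1.
  exists (FinRing.uval x); split; first by rewrite -FinRing.val_unitX x3.
  by apply: contra x1 => /eqP h; apply/eqP/val_inj.
exists w; split => //.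
  by apply/eqP => w0; move: w3; rewrite w0 expr0n /= => /eqP; rewrite eq_sym oner_eq0.
have : (w - 1) * (w ^+ 2 + w + 1) = 0.
  have e : (w - 1) * (w ^+ 2 + w + 1) = w ^+ 3 - 1 by ring.
  by rewrite e w3 subrr.
by move/eqP; rewrite mulf_eq0 subr_eq0 (negPf w1) /= => /eqP.
Qed.

Lemma pgl_fKri (F : finFieldType) (K r i : F) : r != 0 -> is_pgl (fKri K r i).
Proof.
move=> r0; exists K, (r - K * i), 1, (- i); split.
  apply/eqP => h; move/eqP: r0; apply; rewrite mulr1 in h.
  by rewrite -(subrK (K * i) r) -h mulrN addNr.
case=> [y|] /=; rewrite ffunE /=; last by rewrite oner_eq0 divr1.
rewrite mul1r -/(y - i) subr_eq0.
case: (y =P i) => // /eqP yi; congr Some.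
have yi0 : y - i != 0 by rewrite subr_eq0.
by field.
Qed.

Lemma agr_fKri (F : finFieldType) (a r i b s j : F) :
  agr (fKri a r i) (fKri b s j) = [set y : F | a + r / (y - i) == b + s / (y - j)].
Proof. by apply/setP => y; rewrite !inE !contr_fKri (inj_eq (@Some_inj _)). Qed.

Lemma adj_card (F : finFieldType) (f g : {ffun pt F -> pt F}) :
  (4 <= #|F|)%N -> CP_adj f g -> #|agr f g| = 4%N.
Proof.
move=> q4 [_ _ _]; rewrite hd_agr => h.
have hm : (#|agr f g| <= #|F|)%N by apply: max_card.
lia.
Qed.

Lemma card_le (F : finFieldType) (A S : {set F}) (Q : {poly F}) :
  Q != 0 -> (size Q <= 3)%N -> (forall y, y \in A -> y \notin S -> root Q y) ->
  (#|A| <= #|S| + 2)%N.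
Proof.
move=> Q0 sQ h; rewrite -(cardsID S A); apply: leq_add.
  by apply: subset_leq_card; apply: subsetIr.
apply: (roots_le2 Q0 sQ) => y; rewrite inE => /andP [yS yA]; exact: h.
Qed.

Lemma pt_notS (F : fieldType) (i j u : F) : u ^+ 2 + u + 1 = 0 -> i != j ->
  (i + (i - j) * u != i) && (i + (i - j) * u != j).
Proof.
move=> H ij; have [u0 u1 _ _] := root_props H.
have d0 : i - j != 0 by rewrite subr_eq0.
apply/andP; split; rewrite -subr_eq0.
  by rewrite (_ : i + (i - j) * u - i = (i - j) * u) ?mulf_neq0 //; ring.
by rewrite (_ : i + (i - j) * u - j = (i - j) * (u + 1)) ?mulf_neq0 //; ring.
Qed.

Lemma partA (F : finFieldType) (w : F) : w != 0 -> w != 1 -> w ^+ 2 + w + 1 = 0 ->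
  (4 <= #|F|)%N ->
  forall a b i j r s : F, r != 0 -> s != 0 ->
     (CP_adj (fKri a r i) (fKri b s j) <-> (r = s /\ (b - a) * (j - i) = r)).
Proof.
move=> w0 w1 hw q4 a b i j r s r0 s0.
set A := [set y : F | a + r / (y - i) == b + s / (y - j)].
have hS : (#|A :&: [set i; j]| <= (i != j).+1)%N.
  by rewrite -cards2; apply: subset_leq_card; apply: subsetIr.
have hc : (#|A :&: [set i; j]| + #|A :\: [set i; j]| = #|A|)%N by apply: cardsID.
split.
  move=> adj; have := adj_card q4 adj; rewrite agr_fKri -/A => A4.
  case: adj => _ _ neq _.
  have nab : ~ (a = b /\ r = s /\ i = j).
    by case=> [ea [er ei]]; apply: neq; rewrite ea er ei.
  have b2 : (#|A :\: [set i; j]| <= 2)%N by apply: bound2.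
  have ij : i != j.
    by case: (eqVneq i j) hS => // _ /= hS1; have := leq_add hS1 b2; rewrite hc A4.
  have AS : A :&: [set i; j] = [set i; j].
    apply/eqP; rewrite eqEcard subsetIr cards2 ij /=.
    change (1 < #|A :&: [set i; j]|)%N; lia.
  have iA : i \in A.
    have : i \in A :&: [set i; j] by rewrite AS !inE eqxx.
    by case/setIP.
  have jA : j \in A.
    have : j \in A :&: [set i; j] by rewrite AS !inE eqxx orbT.
    by case/setIP.
  move: iA; rewrite inE subrr invr0 mulr0 addr0 => /eqP e1.
  move: jA; rewrite inE subrr invr0 mulr0 addr0 => /eqP e2.
  have d0 : j - i != 0 by rewrite subr_eq0 eq_sym.
  have d1 : i - j != 0 by rewrite subr_eq0.
  have e3 : b - a = r / (j - i) by rewrite -e2; ring.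
  have e4 : b - a = s / (j - i) by rewrite e1; field; rewrite ?d0 ?d1.
  have rs : r = s.
    by have := congr1 (fun t => t * (j - i)) (etrans (esym e3) e4); rewrite /= !divfK.
  by split => //; rewrite e3 divfK.
move=> [rs e]; rewrite -rs in A hS hc *.
have ij : i != j by apply: contraNneq r0 => eij; rewrite -e eij subrr mulr0.
have d0 : j - i != 0 by rewrite subr_eq0 eq_sym.
have d1 : i - j != 0 by rewrite subr_eq0.
split; [exact: pgl_fKri | exact: pgl_fKri | |].
  move=> E; have := congr1 (fun f : {ffun pt F -> pt F} => f (Some i)) E.
  by rewrite !ffunE /= eqxx (negPf ij).
rewrite hd_agr agr_fKri -/A; congr (_ - _)%N.
have nab : ~ (a = b /\ r = r /\ i = j) by case=> _ [_ eij]; move/eqP: ij.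
have b2 : (#|A :\: [set i; j]| <= 2)%N by apply: bound2.
have iA : i \in A.
  rewrite inE subrr invr0 mulr0 addr0; apply/eqP; rewrite -e; field.
  by rewrite d1.
have jA : j \in A.
  rewrite inE subrr invr0 mulr0 addr0; apply/eqP; rewrite -e; field.
  by rewrite d0.
have AS : #|A :&: [set i; j]| = 2%N.
  suff -> : A :&: [set i; j] = [set i; j] by rewrite cards2 ij.
  by apply/setIidPr/subsetP => z /set2P [] ->.
pose w' := - 1 - w.
have hw' : w' ^+ 2 + w' + 1 = 0.
  by rewrite -hw /w'; ring.
have ww : w != w'.
  apply/eqP => eww.
  have : w * (w - 1) = 0.
    have -> : w * (w - 1) = (w ^+ 2 + w + 1) - (w - w') by rewrite /w'; ring.
    by rewrite hw -eww subrr subr0.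
  by move/eqP; rewrite mulf_eq0 subr_eq0 (negPf w0) (negPf w1).
have inAS : forall u, u ^+ 2 + u + 1 = 0 -> i + (i - j) * u \in A :\: [set i; j].
  move=> u hu; rewrite !inE negb_or pt_notS //=.
  by apply/eqP; apply: agree_pt.
have two : (2 <= #|A :\: [set i; j]|)%N.
  have <- : #|[set i + (i - j) * w; i + (i - j) * w']| = 2%N.
    have ne : i + (i - j) * w != i + (i - j) * w'.
      by apply: contra ww => /eqP /addrI /(mulfI d1) ->.
    by rewrite cards2 ne.
  by apply: subset_leq_card; apply/subsetP => z /set2P [] ->; apply: inAS.
change (#|A| = 4%N); lia.
Qed.

Lemma pgl_cases (F : finFieldType) (g : {ffun pt F -> pt F}) : is_pgl g ->
  (g None = None /\ exists al be : F, al != 0 /\ forall y, g (Some y) = Some (al * y + be))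
  \/ (exists K r i : F, r != 0 /\ g = fKri K r i).
Proof.
case=> [a [b [c [d [nd hg]]]]].
case: (eqVneq c 0) => [c0|c0].
  left; rewrite hg /= c0 eqxx; split => //.
  have d0 : d != 0 by apply: contra nd => /eqP ->; rewrite c0 !mulr0.
  have a0 : a != 0 by apply: contra nd => /eqP ->; rewrite c0 mulr0 mul0r.
  exists (a / d), (b / d); split; first by rewrite mulf_neq0 ?invr_eq0.
  move=> y; rewrite hg /= c0 mul0r add0r (negPf d0); congr Some; by field.
right; exists (a / c), ((b * c - a * d) / c ^+ 2), (- d / c); split.
  by rewrite mulf_neq0 ?invr_eq0 ?expf_neq0 // subr_eq0 eq_sym.
apply/ffunP => -[y|]; rewrite hg ffunE /=; last by rewrite (negPf c0).
have e : (c * y + d == 0) = (y == - d / c).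
  have -> : c * y + d = c * (y - (- d / c)) by field.
  by rewrite mulf_eq0 (negPf c0) subr_eq0.
rewrite e; case: eqP => // /eqP yi; congr Some.
have yi0 : y - (- d / c) != 0 by rewrite subr_eq0.
have cyd : c * y + d != 0 by rewrite e.
by field; rewrite c0 /= opprK mulrC.
Qed.

Lemma agr_eq (F : finFieldType) (f g : {ffun pt F -> pt F}) (phi psi : F -> F) :
  (forall y, contr f (Some y) = Some (phi y)) -> (forall y, contr g (Some y) = Some (psi y)) ->
  agr f g = [set y : F | phi y == psi y].
Proof.
by move=> hf hg; apply/setP => y; rewrite !inE hf hg (inj_eq (@Some_inj _)).
Qed.

Lemma contr_aff (F : finFieldType) (f : {ffun pt F -> pt F}) (al be : F) :
  (forall y, f (Some y) = Some (al * y + be)) -> forall y, contr f (Some y) = Some (al * y + be).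
Proof. by move=> hf y; rewrite /contr ffunE hf. Qed.

Lemma partB (F : finFieldType) (w : F) : w != 0 -> w != 1 -> w ^+ 2 + w + 1 = 0 ->
  (4 <= #|F|)%N -> forall f : {ffun option F -> option F}, is_pgl f ->
     (CP_isolated f <-> f None = None).
Proof.
move=> w0 w1 hw q4 f pf; split.
  case=> _ iso; case: (pgl_cases pf) => [[-> _] //|[K [r [i [r0 ef]]]]].
  exfalso; apply: (iso (fKri (K + r) r (i + 1))); first exact: pgl_fKri.
  rewrite ef; apply/(partA w0 w1 hw q4) => //; split => //; ring.
move=> fN; split => // g pg adj.
have A4 := adj_card q4 adj.
case: adj => _ _ neq _.
have [al [be [al0 hf]]] : exists al be : F, al != 0 /\ forall y, f (Some y) = Some (al * y + be).
  case: (pgl_cases pf) => [[_ //]|[K [r [i [r0 ef]]]]].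
  by move: fN; rewrite ef ffunE.
have cf := contr_aff hf.
case: (pgl_cases pg) => [[gN [ga [gb [ga0 hg]]]] | [K [r [i [r0 eg]]]]].
  have A4' : (#|[set y : F | (al * y + be == ga * y + gb)%R]| = 4)%N.
    by rewrite -(agr_eq cf (contr_aff hg)).
  pose Q : {poly F} := (al - ga) *: 'X + (be - gb)%:P.
  have Qy : forall y, Q.[y] = (al * y + be) - (ga * y + gb).
    by move=> y; rewrite /Q !hornerD !hornerZ hornerX hornerC; ring.
  have Q0 : Q != 0.
    apply/eqP => Q0; apply: neq; apply/ffunP => -[y|]; last by rewrite fN gN.
    have e1 : al - ga = 0.
      have := congr1 (fun p : {poly F} => p`_1) Q0.
      by rewrite /Q coefD coefZ coefX coefC /= mulr1 addr0 coef0.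
    have e2 : be - gb = 0.
      have := congr1 (fun p : {poly F} => p`_0) Q0.
      by rewrite /Q coefD coefZ coefX coefC /= mulr0 add0r coef0.
    by rewrite hf hg; move/eqP: e1; move/eqP: e2; rewrite !subr_eq0 => /eqP -> /eqP ->.
  suff h : (#|[set y : F | (al * y + be == ga * y + gb)%R]| <= #|@set0 F| + 2)%N.
    by move: h; rewrite A4' cards0.
  apply: card_le Q0 _ _.
    apply/leq_sizeP => k hk; rewrite /Q coefD coefZ coefX coefC.
    by case: k hk => [|[|[|k]]] //= _; rewrite ?mulr0 ?addr0.
  by move=> y; rewrite inE => /eqP e _; rewrite /root Qy e subrr.
have cg : forall y, contr g (Some y) = Some (K + r / (y - i)) by move=> y; rewrite eg contr_fKri.
have A4' : (#|[set y : F | (al * y + be == K + r / (y - i))%R]| = 4)%N.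
  by rewrite -(agr_eq cf cg).
pose Q : {poly F} := al *: 'X^2 + (be - K - al * i) *: 'X + (- (be - K) * i - r)%:P.
have Qy : forall y, Q.[y] = (al * y + be - K) * (y - i) - r.
  by move=> y; rewrite /Q !hornerD !hornerZ hornerXn hornerX hornerC; ring.
have Q0 : Q != 0.
  apply/eqP => Q0; move/eqP: al0; apply.
  have := congr1 (fun p : {poly F} => p`_2) Q0.
  by rewrite /Q !coefD !coefZ coefXn coefX coefC /= mulr1 mulr0 !addr0 coef0.
suff h : (#|[set y : F | (al * y + be == K + r / (y - i))%R]| <= #|[set i]| + 2)%N.
  by move: h; rewrite A4' cards1.
apply: card_le Q0 _ _.
  apply/leq_sizeP => k hk; rewrite /Q !coefD !coefZ coefXn coefX coefC.
  by case: k hk => [|[|[|k]]] //= _; rewrite !mulr0 !addr0.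
move=> y; rewrite !inE => /eqP e yi; rewrite /root Qy e.
have yi0 : y - i != 0 by rewrite subr_eq0.
by rewrite addrAC subrr add0r divfK // subrr.
Qed.

Unset Implicit Arguments.

Theorem corollary12 (F : finFieldType) (p m : nat) :
  prime p -> odd p -> #|F| = (p ^ m)%N -> (#|F| %% 3 = 1)%N -> (13 <= #|F|)%N ->
  (forall a b i j r s : F, r != 0 -> s != 0 ->
     (CP_adj (fKri a r i) (fKri b s j) <-> (r = s /\ (b - a) * (j - i) = r)))
  /\
  (forall f : {ffun option F -> option F}, is_pgl f ->
     (CP_isolated f <-> f None = None)).
Proof.
move=> _ _ _ h3 h13.
have [w [w0 w1 hw]] := cube_root h3.
have q4 : (4 <= #|F|)%N by apply: leq_trans h13.
split; [exact: partA w0 w1 hw q4 | exact: partB w0 w1 hw q4].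
Qed.
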